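(* Let $(X,+,d)$ be a complete, locally compact Abelian metric group with translation-invariant metric $d$. Then the spectre operator $S:K(X)\to K(X)$ is upper-semicontinuous at every $A\in K(X)$; that is, for every $A\in K(X)$ and every $\varepsilon>0$ there exists $\delta>0$ such that for all $B\in K(X)$ with $d_H(A,B)<\delta$ we have $S(B)\subset S(A)_\varepsilon$.
   Context: $d$ satisfies $d(x,y)=d(x+z,y+z)$ for all $x,y,z\in X$. $K(X)$ is the family of non-empty compact subsets of $X$ with the Pompeiu–Hausdorff metric $d_H(A,B)=\max\{\sup_{a\in A}d(a,B),\sup_{b\in B}d(A,b)\}$. For $C\subset X$, $C_\varepsilon:=\{x\in X:\ \exists_{c\in C}\ d(x,c)<\varepsilon\}$. The spectre of $A\subset X$ is $S(A):=\{z\in X:\ \forall_{a\in A}\ (a+z\in A \text{ or } a-z\in A)\}$; it is compact for compact non-empty $A$. *)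

(* Defs.v *)
From HB Require Import structures.
From mathcomp Require Import all_boot all_order all_algebra.
From mathcomp Require Import boolp classical_sets reals.
From Stdlib Require List.
Set Implicit Arguments. Unset Strict Implicit. Unset Printing Implicit Defensive.
Import Order.TTheory GRing.Theory Num.Theory.
Local Open Scope classical_set_scope.
Local Open Scope ring_scope.

Section MetricGroup.
Context {R : realType} {X : zmodType} (d : X -> X -> R).

Definition is_metric : Prop :=
  (forall x y, d x y = 0 <-> x = y) /\
  (forall x y, d x y = d y x) /\
  (forall x y z, d x z <= d x y + d y z).

Definition translation_invariant : Prop :=
  forall x y z, d x y = d (x + z) (y + z).

Definition dball (x : X) (r : R) : set X := [set y | d x y < r].

Definition d_open (U : set X) : Prop :=
  forall x, U x -> exists2 r : R, 0 < r & dball x r `<=` U.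

Definition d_compact (K : set X) : Prop :=
  forall (I : Type) (U : I -> set X),
    (forall i, d_open (U i)) -> K `<=` \bigcup_i U i ->
    exists s : seq I, K `<=` [set x | exists2 i, List.In i s & U i x].

Definition d_complete : Prop :=
  forall u : nat -> X,
    (forall e : R, 0 < e -> exists N : nat, forall m n, (N <= m)%N -> (N <= n)%N -> d (u m) (u n) < e) ->
    exists l : X, forall e : R, 0 < e -> exists N : nat, forall n, (N <= n)%N -> d (u n) l < e.

Definition d_locally_compact : Prop :=
  forall x : X, exists K : set X, d_compact K /\ exists2 r : R, 0 < r & dball x r `<=` K.

Definition inKX (A : set X) : Prop := A !=set0 /\ d_compact A.

Definition dist_pt_set (a : X) (B : set X) : R := inf [set d a b | b in B].
Definition dist_set_pt (A : set X) (b : X) : R := inf [set d a b | a in A].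

Definition dH (A B : set X) : R :=
  Num.max (sup [set dist_pt_set a B | a in A]) (sup [set dist_set_pt A b | b in B]).

Definition eps_nbhd (C : set X) (eps : R) : set X :=
  [set x | exists2 c, C c & d x c < eps].

End MetricGroup.

Definition spectre {X : zmodType} (A : set X) : set X :=
  [set z | forall a, A a -> A (a + z)%R \/ A (a - z)%R].

(* Main.v *)
Require Import Defs.
From HB Require Import structures.
From mathcomp Require Import all_boot all_order all_algebra.
From mathcomp Require Import boolp classical_sets reals.
From Stdlib Require List.
From mathcomp Require Import lra.
Set Implicit Arguments. Unset Strict Implicit.
Import Order.TTheory GRing.Theory Num.Theory.
Local Open Scope classical_set_scope.
Local Open Scope ring_scope.

Lemma d_ge0 (R : realType) (X : zmodType) (d : X -> X -> R) :
  is_metric d -> forall x y, 0 <= d x y.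
Proof.
move=> [h0 [hs ht]] x y.
have := ht x y x; rewrite (proj2 (h0 x x) erefl) (hs y x) => H.
lra.
Qed.

Lemma dball_open (R : realType) (X : zmodType) (d : X -> X -> R) :
  is_metric d -> forall y r, d_open d (dball d y r).
Proof.
move=> [h0 [hs ht]] y r x Hx; exists (r - d y x); first by rewrite subr_gt0.
move=> w Hw; rewrite /dball /=; have := ht y x w.
move: Hw; rewrite /dball /= => Hw H; apply: (le_lt_trans H).
by rewrite -ltrBrDl.
Qed.

Lemma ball_cover (R : realType) (X : zmodType) (d : X -> X -> R)
  (hmet : is_metric d) (K : set X) (P : X -> R -> Prop) :
  d_compact d K -> (forall k, K k -> exists2 r, 0 < r & P k r) ->
  exists s : seq (X * R), (forall p, List.In p s -> 0 < p.2 /\ P p.1 p.2) /\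
    K `<=` [set x | exists2 p, List.In p s & d p.1 x < p.2].
Proof.
move=> hK hP.
pose I := {p : X * R | 0 < p.2 /\ P p.1 p.2}.
have H1 : forall i : I, d_open d (dball d (sval i).1 (sval i).2).
  by move=> i; apply: dball_open.
have H2 : K `<=` \bigcup_(i : I) dball d (sval i).1 (sval i).2.
  move=> k Kk; have [r r0 Pr] := hP k Kk.
  exists (exist _ (k, r) (conj r0 Pr)) => //.
  by rewrite /dball /= (proj2 ((proj1 hmet) k k) erefl).
have [s Hs] := hK I _ H1 H2.
exists (map sval s); split.
- move=> p /List.in_map_iff [i [<- _]]; exact: (svalP i).
- move=> x /Hs [i Hi Ui]; exists (sval i) => //.
  exact: List.in_map.
Qed.

Lemma seq_min (R : realType) (T : Type) (f : T -> R) (s : seq T) :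
  (forall p, List.In p s -> 0 < f p) ->
  exists2 m, 0 < m & forall p, List.In p s -> m <= f p.
Proof.
elim: s => [|x s IH] H; first by exists 1.
have [|m m0 Hm] := IH; first by move=> p Hp; apply: H; right.
have fx0 : 0 < f x by apply: H; left.
exists (Num.min (f x) m); first by rewrite lt_min fx0 m0.
move=> p [<-|Hp]; first by rewrite ge_min lexx.
by rewrite ge_min Hm // orbT.
Qed.

Lemma seq_max (R : realType) (T : Type) (f : T -> R) (s : seq T) :
  exists M, forall p, List.In p s -> f p <= M.
Proof.
elim: s => [|x s [M HM]]; first by exists 0.
exists (Num.max (f x) M) => p [<-|Hp]; first by rewrite le_max lexx.
by rewrite le_max HM // orbT.
Qed.
Lemma compact_bounded (R : realType) (X : zmodType) (d : X -> X -> R)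
  (hmet : is_metric d) (K : set X) :
  d_compact d K -> forall x, exists M, forall k, K k -> d x k <= M.
Proof.
move=> hK x.
have [|s [Hs Hc]] := ball_cover hmet (P := fun _ r => r = 1) hK.
  by move=> k _; exists 1.
have [M HM] := seq_max (fun p : X * R => d x p.1 + p.2) s.
exists M => k /Hc [p Hp Hpk].
have := HM p Hp; have := (proj2 (proj2 hmet)) x p.1 k; simpl in *; lra.
Qed.

Lemma compact_closed (R : realType) (X : zmodType) (d : X -> X -> R)
  (hmet : is_metric d) (K : set X) :
  d_compact d K -> forall x, ~ K x -> exists2 r, 0 < r & forall w, K w -> r <= d x w.
Proof.
move=> hK x nKx.
have [|s [Hs Hc]] := ball_cover hmet (P := fun k r => 2 * r <= d x k) hK.
  move=> k Kk; exists (d x k / 2); last by lra.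
  have := d_ge0 hmet x k; have : d x k <> 0.
    by move/(proj1 (proj1 hmet x k)) => e; apply: nKx; rewrite e.
  move=> h1 h2; have : 0 < d x k by rewrite lt_neqAle h2 andbT eq_sym; apply/eqP.
  lra.
have [m m0 Hm] := seq_min (f := fun p : X * R => p.2) (fun p Hp => proj1 (Hs p Hp)).
exists m => // w /Hc [p Hp Hpw].
have := Hm p Hp; have := proj2 (Hs p Hp); have := (proj2 (proj2 hmet)) x w p.1.
have := (proj1 (proj2 hmet)) w p.1; simpl in *; lra.
Qed.

Lemma dH_near (R : realType) (X : zmodType) (d : X -> X -> R)
  (hmet : is_metric d) (A B : set X) (delta : R) :
  inKX d A -> inKX d B -> dH d A B < delta ->
  (forall a, A a -> exists2 b, B b & d a b < delta) /\
  (forall b, B b -> exists2 a, A a & d a b < delta).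
Proof.
move=> [[a0 Aa0] cA] [[b0 Bb0] cB] hd.
have [MA HA] := compact_bounded hmet cA a0.
have [MB HB] := compact_bounded hmet cB a0.
have hM : forall a b, A a -> B b -> d a b <= MA + MB.
  move=> a b Aa Bb; have := HA a Aa; have := HB b Bb.
  have := (proj2 (proj2 hmet)) a a0 b; have := (proj1 (proj2 hmet)) a a0; lra.
move: hd; rewrite /dH gt_max => /andP [h1 h2]; split.
- move=> a Aa.
  have hlb : has_lbound [set d a b | b in B].
    by exists 0 => _ [b _ <-]; apply: d_ge0.
  have : dist_pt_set d a B < delta.
    apply: le_lt_trans h1; apply: ub_le_sup; last by exists a.
    exists (MA + MB) => _ [a' Aa' <-].
    apply: (le_trans _ (hM a' b0 Aa' Bb0)); apply: ge_inf; last by exists b0.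
    by exists 0 => _ [b _ <-]; apply: d_ge0.
  move/inf_lt => [|_ [b Bb <-] hb]; first by exists (d a b0), b0.
  by exists b.
- move=> b Bb.
  have : dist_set_pt d A b < delta.
    apply: le_lt_trans h2; apply: ub_le_sup; last by exists b.
    exists (MA + MB) => _ [b' Bb' <-].
    apply: (le_trans _ (hM a0 b' Aa0 Bb')); apply: ge_inf; last by exists a0.
    by exists 0 => _ [a _ <-]; apply: d_ge0.
  move/inf_lt => [|_ [a Aa <-] ha]; first by exists (d a0 b), a0.
  by exists a.
Qed.

Lemma d_opp (R : realType) (X : zmodType) (d : X -> X -> R) :
  is_metric d -> translation_invariant d -> forall x y, d (- x) (- y) = d x y.
Proof.
move=> hmet hinv x y; rewrite (hinv (- x) (- y) (x + y)).
rewrite addrA addNr add0r addrCA addNr addr0; exact: (proj1 (proj2 hmet)).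
Qed.

Lemma d_subr (R : realType) (X : zmodType) (d : X -> X -> R) :
  translation_invariant d -> forall x y c, d (x - c) (y - c) = d x y.
Proof. by move=> hinv x y c; rewrite -hinv. Qed.

Lemma d_subl (R : realType) (X : zmodType) (d : X -> X -> R) :
  is_metric d -> translation_invariant d -> forall x y c, d (c - x) (c - y) = d x y.
Proof.
move=> hmet hinv x y c; rewrite (addrC c) (addrC c) -hinv; exact: d_opp.
Qed.

Lemma d_addr (R : realType) (X : zmodType) (d : X -> X -> R) :
  is_metric d -> translation_invariant d -> forall x y c, d (c + x) (c + y) = d x y.
Proof. by move=> hmet hinv x y c; rewrite (addrC c) (addrC c) -hinv. Qed.

Lemma not_spec (R : realType) (X : zmodType) (d : X -> X -> R)
  (hmet : is_metric d) (hinv : translation_invariant d) (A : set X) (y : X) :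
  inKX d A -> ~ spectre A y ->
  exists2 rho, 0 < rho & forall B, inKX d B -> dH d A B < rho ->
    forall z, d y z < rho -> ~ spectre B z.
Proof.
move=> hA ny.
have [a [Aa [n1 n2]]] : exists a, A a /\ ~ A (a + y) /\ ~ A (a - y).
  apply: contra_notP ny => H a' Aa'.
  have [h1|h1] := EM (A (a' + y)); [by left|right].
  apply: contra_notP H => h2; exists a'; tauto.
have [r1 r10 H1] := compact_closed hmet (proj2 hA) n1.
have [r2 r20 H2] := compact_closed hmet (proj2 hA) n2.
exists (Num.min r1 r2 / 3); first by rewrite divr_gt0 // lt_min r10 r20.
set rho := Num.min r1 r2 / 3.
have hr1 : 3 * rho <= r1 by rewrite /rho mulrC divfK ?ge_min ?lexx // pnatr_eq0.
have hr2 : 3 * rho <= r2 by rewrite /rho mulrC divfK ?ge_min ?lexx ?orbT // pnatr_eq0.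
move=> B hB hd z dz Sz.
have [hn1 hn2] := dH_near hmet hA hB hd.
have [b Bb dab] := hn1 a Aa.
have tri := proj2 (proj2 hmet).
have [Bz|Bz] := Sz b Bb.
- have [a' Aa' da'] := hn2 _ Bz.
  have := H1 a' Aa'.
  have := tri (a + y) (b + y) a'; have := tri (b + y) (b + z) a'.
  rewrite d_addr // (proj1 (proj2 hmet) (b + z) a') in da' *.
  have := d_subr hinv a b (- y); rewrite !opprK => e; rewrite e. lra.
- have [a' Aa' da'] := hn2 _ Bz.
  have := H2 a' Aa'.
  have := tri (a - y) (b - y) a'; have := tri (b - y) (b - z) a'.
  rewrite d_addr // d_opp // (proj1 (proj2 hmet) (b - z) a') in da' *.
  rewrite (d_subr hinv a b y). lra.
Qed.

Definition Gd (R : realType) (X : zmodType) (d : X -> X -> R) (A : set X) (eps : R)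
  (y : X) (rho : R) : Prop :=
  (forall z, d y z < rho -> eps_nbhd d (spectre A) eps z) \/
  (forall B, inKX d B -> dH d A B < rho -> forall z, d y z < rho -> ~ spectre B z).

Lemma Gd_mono (R : realType) (X : zmodType) (d : X -> X -> R) A eps y (r r' : R) :
  Gd d A eps y r -> r' <= r -> Gd d A eps y r'.
Proof.
move=> [H|H] hr; [left|right].
- by move=> z dz; apply: H; apply: lt_le_trans hr.
- move=> B hB hd z dz; apply: H => //; exact: lt_le_trans hr.
Qed.

Lemma Gd_ex (R : realType) (X : zmodType) (d : X -> X -> R)
  (hmet : is_metric d) (hinv : translation_invariant d) (A : set X) eps :
  inKX d A -> 0 < eps -> forall y, exists2 rho, 0 < rho & Gd d A eps y rho.
Proof.
move=> hA he y; have [Sy|nSy] := EM (spectre A y).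
- exists eps => //; left => z dz; exists y => //.
  by rewrite (proj1 (proj2 hmet)).
- have [rho r0 H] := not_spec hmet hinv hA nSy.
  by exists rho => //; right.
Qed.

Unset Implicit Arguments.

Theorem theorem3p12 (R : realType) (X : zmodType) (d : X -> X -> R)
  (hmet : is_metric d) (hinv : translation_invariant d)
  (hcompl : d_complete d) (hloc : d_locally_compact d) :
  forall A : set X, inKX d A ->
  forall eps : R, 0 < eps ->
  exists2 delta : R, 0 < delta &
    forall B : set X, inKX d B -> dH d A B < delta ->
      spectre B `<=` eps_nbhd d (spectre A) eps.
Proof.
move=> A hA eps he.
have [[a0 Aa0] cA] := hA.
have [|s [Hs Hc]] := @ball_cover _ _ _ hmet A
   (fun a r => Gd d A eps (a - a0) (2 * r) /\ Gd d A eps (a0 - a) (2 * r)) cA.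
  move=> a _.
  have [r1 r10 G1] := Gd_ex hmet hinv hA he (a - a0).
  have [r2 r20 G2] := Gd_ex hmet hinv hA he (a0 - a).
  exists (Num.min r1 r2 / 2); first by rewrite divr_gt0 // lt_min r10 r20.
  rewrite mulrC divfK ?pnatr_eq0 //; split.
  + by apply: (Gd_mono G1); rewrite ge_min lexx.
  + by apply: (Gd_mono G2); rewrite ge_min lexx orbT.
have [m m0 Hm] := seq_min (f := fun p : X * R => p.2) (fun p Hp => proj1 (Hs p Hp)).
exists (m / 2); first by rewrite divr_gt0.
move=> B hB hd z Sz.
have [hn1 hn2] := dH_near hmet hA hB hd.
have [b0 Bb0 d0] := hn1 a0 Aa0.
have tri := proj2 (proj2 hmet).
have dsym := proj1 (proj2 hmet).
have [Bz|Bz] := Sz b0 Bb0.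
- have [a Aa da] := hn2 _ Bz.
  have [p Hp dp] := Hc a Aa.
  have [_ [G _]] := Hs p Hp.
  have hmp := Hm p Hp.
  have dz : d (p.1 - a0) z < 2 * p.2.
    have e1 : z = (b0 + z) - b0 by rewrite addrC addKr.
    have := tri (p.1 - a0) (a - a0) z; rewrite d_subr //.
    have := tri (a - a0) ((b0 + z) - a0) z; rewrite d_subr //.
    have e2 : d (b0 + z - a0) z = d a0 b0.
      by rewrite -(d_subl hmet hinv a0 b0 (b0 + z)); congr (d _ _).
    rewrite e2. simpl in *. lra.
  case: G => G; first exact: G.
  exfalso; apply: (G B hB _ z dz Sz); simpl in *; lra.
- have [a Aa da] := hn2 _ Bz.
  have [p Hp dp] := Hc a Aa.
  have [_ [_ G]] := Hs p Hp.
  have hmp := Hm p Hp.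
  have dz : d (a0 - p.1) z < 2 * p.2.
    have e1 : z = b0 - (b0 - z) by rewrite opprB addrC subrK.
    have := tri (a0 - p.1) (a0 - a) z; rewrite d_subl //.
    have := tri (a0 - a) (a0 - (b0 - z)) z.
    have e2 : d (a0 - (b0 - z)) z = d a0 b0.
      by rewrite -(d_subr hinv a0 b0 (b0 - z)); congr (d _ _).
    rewrite e2 d_subl //. simpl in *. lra.
  case: G => G; first exact: G.
  exfalso; apply: (G B hB _ z dz Sz); simpl in *; lra.
Qed.
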